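(* Let $w$ be a nonnegative continuous weight on $[-1,1]$ and $\{p_l\}$ the orthonormal polynomials (positive leading coefficients) with recurrence $b_{l+1}p_{l+1}(x)=(x-a_l)p_l(x)-b_lp_{l-1}(x)$, $p_{-1}=0$, $p_0=1/b_0$, $a_l\in\mathbb{R}$, $b_l>0$. Let $0\le m\le n$, $\gamma\in\mathbb{R}$, $\delta\ge0$. Then for $x\ne y$: $\sum_{k=m}^np_k(x)p_{k-m}(y,m)=b_{n+1}\dfrac{p_{n+1}(x)p_{n-m}(y,m)-p_{n-m+1}(y,m)p_n(x)}{x-y}+b_m\dfrac{p_{m-1}(x)}{x-y}$, and $\sum_{k=m}^np_k(x)p_{k-m}(y,m,\gamma,\delta)=b_{n+1}\dfrac{p_{n+1}(x)p_{n-m}(y,m,\gamma,\delta)-p_{n-m+1}(y,m,\gamma,\delta)p_n(x)}{x-y}+\dfrac{p_m(x)((\delta-1)y-\gamma)}{x-y}+b_m\dfrac{p_{m-1}(x)}{x-y}$.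
   Context: Associated polynomials: $p_{-1}(x,m)=0$, $p_0(x,m)=1$, $b_{m+l+1}p_{l+1}(x,m)=(x-a_{m+l})p_l(x,m)-b_{m+l}p_{l-1}(x,m)$ for $l\ge0$. Scaled co-recursive associated polynomials: $p_0(x,m,\gamma,\delta)=1$, $p_1(x,m,\gamma,\delta)=(\delta x-a_m-\gamma)/b_{m+1}$, and $b_{m+l+1}p_{l+1}(x,m,\gamma,\delta)=(x-a_{m+l})p_l(x,m,\gamma,\delta)-b_{m+l}p_{l-1}(x,m,\gamma,\delta)$ for $l\ge1$. *)

(* Defs.v *)
From Stdlib Require Import Reals.
From Coquelicot Require Import Coquelicot.
Open Scope R_scope.

(* Generic three-term recurrence (shifted by one so that index -1 exists):
   rec3 c0 c1 a b l x returns the pair (q_{l-1}(x), q_l(x)) where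
   q_{-1} = c0, q_0 = c1 and
   b (l+1) * q_{l+1} = (x - a l) * q_l - b l * q_{l-1}. *)
Fixpoint rec3 (c0 c1 : R) (a b : nat -> R) (l : nat) (x : R) : R * R :=
  match l with
  | O => (c0, c1)
  | S l' => let (u, v) := rec3 c0 c1 a b l' x in
            (v, ((x - a l') * v - b l' * u) / b (S l'))
  end.

Definition opoly (a b : nat -> R) (l : nat) (x : R) : R :=
  snd (rec3 0 (/ b O) a b l x).

Definition opoly_prev (a b : nat -> R) (l : nat) (x : R) : R :=
  fst (rec3 0 (/ b O) a b l x).

Definition assoc_poly (a b : nat -> R) (m l : nat) (x : R) : R :=
  snd (rec3 0 1 (fun k => a (m + k)%nat) (fun k => b (m + k)%nat) l x).

(* Scaled co-recursive associated polynomials p_l(x, m, gamma, delta):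
   p_0 = 1, p_1 = (delta x - a_m - gamma)/b_{m+1}, and for l >= 1
   b_{m+l+1} p_{l+1} = (x - a_{m+l}) p_l - b_{m+l} p_{l-1}. *)
Definition scr_poly (a b : nat -> R) (m : nat) (g d : R) (l : nat) (x : R) : R :=
  match l with
  | O => 1
  | S l' => snd (rec3 1 ((d * x - a m - g) / b (S m))
                   (fun k => a (m + S k)%nat) (fun k => b (m + S k)%nat) l' x)
  end.

(* Main.v *)
Require Import Defs.
From Stdlib Require Import Reals Lra Lia.
From Coquelicot Require Import Coquelicot.
Open Scope R_scope.

Lemma cd_gen (a b : nat -> R) (x y : R) (m : nat) (P Pp Q Qp : nat -> R)
  (HP : forall k, b (S k) * P (S k) = (x - a k) * P k - b k * Pp k)
  (HPp : forall k, Pp (S k) = P k)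
  (HQ : forall j, b (m + S j)%nat * Q (S j) = (y - a (m + j)%nat) * Q j - b (m + j)%nat * Qp j)
  (HQp : forall j, Qp (S j) = Q j) (N : nat) :
  (x - y) * sum_f_R0 (fun j => P (m + j)%nat * Q j) N
  = b (m + S N)%nat * (P (m + S N)%nat * Q N - Q (S N) * P (m + N)%nat)
    - b m * (P m * Qp O - Q O * Pp m).
Proof.
  induction N as [|N IH].
  - simpl. rewrite Nat.add_0_r.
    assert (E1 : b (m + 1)%nat * P (m + 1)%nat * Q O = ((x - a m) * P m - b m * Pp m) * Q O).
    { rewrite <- HP. replace (m + 1)%nat with (S m) by lia. reflexivity. }
    assert (E2 := HQ O). rewrite Nat.add_0_r in E2.
    assert (E2' : b (m + 1)%nat * Q 1%nat * P m = ((y - a m) * Q O - b m * Qp O) * P m)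
      by (rewrite <- E2; reflexivity).
    nra.
  - change (sum_f_R0 (fun j => P (m + j)%nat * Q j) (S N)) with
      (sum_f_R0 (fun j => P (m + j)%nat * Q j) N + P (m + S N)%nat * Q (S N)).
    assert (E1 : b (m + S (S N))%nat * P (m + S (S N))%nat * Q (S N)
                 = ((x - a (m + S N)%nat) * P (m + S N)%nat - b (m + S N)%nat * Pp (m + S N)%nat) * Q (S N)).
    { rewrite <- HP. replace (m + S (S N))%nat with (S (m + S N)) by lia. reflexivity. }
    assert (E3 : Pp (m + S N)%nat = P (m + N)%nat).
    { replace (m + S N)%nat with (S (m + N)) by lia. apply HPp. }
    assert (E2 : b (m + S (S N))%nat * Q (S (S N)) * P (m + S N)%nat
                 = ((y - a (m + S N)%nat) * Q (S N) - b (m + S N)%nat * Qp (S N)) * P (m + S N)%nat)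
      by (rewrite <- HQ; reflexivity).
    rewrite HQp in E2. rewrite E3 in E1. nra.
Qed.

Lemma rec3_S c0 c1 a b l x :
  rec3 c0 c1 a b (S l) x = (snd (rec3 c0 c1 a b l x),
     ((x - a l) * snd (rec3 c0 c1 a b l x) - b l * fst (rec3 c0 c1 a b l x)) / b (S l)).
Proof. simpl. destruct (rec3 c0 c1 a b l x); reflexivity. Qed.

Lemma rec3_rec c0 c1 a b l x (hb : b (S l) <> 0) :
  b (S l) * snd (rec3 c0 c1 a b (S l) x)
  = (x - a l) * snd (rec3 c0 c1 a b l x) - b l * fst (rec3 c0 c1 a b l x).
Proof. rewrite rec3_S; simpl. field. exact hb. Qed.

Theorem lemma3p1 (w : R -> R) (a b : nat -> R)
  (w_cont : forall t, -1 <= t <= 1 ->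
     filterlim w (within (fun s => -1 <= s <= 1) (locally t)) (locally (w t)))
  (w_nonneg : forall t, -1 <= t <= 1 -> 0 <= w t)
  (b_pos : forall l, 0 < b l)
  (orthonormal : forall i j : nat,
     RInt (fun t => opoly a b i t * opoly a b j t * w t) (-1) 1
     = if Nat.eqb i j then 1 else 0)
  (m n : nat) (hmn : (m <= n)%nat) (gamma delta : R) (hdelta : 0 <= delta)
  (x y : R) (hxy : x <> y) :
  sum_f_R0 (fun j => opoly a b (m + j) x * assoc_poly a b m j y) (n - m)
  = b (S n) * (opoly a b (S n) x * assoc_poly a b m (n - m) y
               - assoc_poly a b m (S (n - m)) y * opoly a b n x) / (x - y)
    + b m * opoly_prev a b m x / (x - y)
  /\
  sum_f_R0 (fun j => opoly a b (m + j) x * scr_poly a b m gamma delta j y) (n - m)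
  = b (S n) * (opoly a b (S n) x * scr_poly a b m gamma delta (n - m) y
               - scr_poly a b m gamma delta (S (n - m)) y * opoly a b n x) / (x - y)
    + opoly a b m x * ((delta - 1) * y - gamma) / (x - y)
    + b m * opoly_prev a b m x / (x - y).
Proof.
  assert (bnz : forall l, b l <> 0) by (intro l; specialize (b_pos l); lra).
  assert (xy : x - y <> 0) by lra.
  assert (HP : forall k, b (S k) * opoly a b (S k) x
                 = (x - a k) * opoly a b k x - b k * opoly_prev a b k x).
  { intro k. unfold opoly, opoly_prev. apply rec3_rec. apply bnz. }
  assert (HPp : forall k, opoly_prev a b (S k) x = opoly a b k x).
  { intro k. unfold opoly, opoly_prev. rewrite rec3_S. reflexivity. }
  destruct (Nat.le_exists_sub m n hmn) as [N [-> _]].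
  replace (N + m - m)%nat with N by lia.
  replace (S (N + m)) with (m + S N)%nat by lia.
  replace (N + m)%nat with (m + N)%nat by lia.
  split.
  - pose (Q := fun j => assoc_poly a b m j y).
    pose (Qp := fun j => fst (rec3 0 1 (fun k => a (m + k)%nat) (fun k => b (m + k)%nat) j y)).
    assert (H := cd_gen a b x y m (fun k => opoly a b k x) (fun k => opoly_prev a b k x) Q Qp
                  HP HPp).
    assert (HQ : forall j, b (m + S j)%nat * Q (S j) = (y - a (m + j)%nat) * Q j - b (m + j)%nat * Qp j).
    { intro j. unfold Q, Qp, assoc_poly.
      apply (rec3_rec 0 1 (fun k => a (m + k)%nat) (fun k => b (m + k)%nat)). apply bnz. }
    assert (HQp : forall j, Qp (S j) = Q j).
    { intro j. unfold Q, Qp, assoc_poly. rewrite rec3_S. reflexivity. }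
    specialize (H HQ HQp N).
    assert (Q0 : Q O = 1) by reflexivity. assert (Qp0 : Qp O = 0) by reflexivity.
    rewrite Q0, Qp0 in H. unfold Q in H. cbv beta in H.
    apply (Rmult_eq_reg_l (x - y)); [|exact xy].
    rewrite H. field. exact xy.
  - pose (r1 := (delta * y - a m - gamma) / b (S m)).
    pose (Q := fun j => scr_poly a b m gamma delta j y).
    pose (Qp := fun j => match j with
                 | O => ((y - a m) - b (S m) * r1) / b m
                 | S j' => fst (rec3 1 r1 (fun k => a (m + S k)%nat) (fun k => b (m + S k)%nat) j' y)
                 end).
    assert (H := cd_gen a b x y m (fun k => opoly a b k x) (fun k => opoly_prev a b k x) Q Qp
                  HP HPp).
    assert (HQ : forall j, b (m + S j)%nat * Q (S j) = (y - a (m + j)%nat) * Q j - b (m + j)%nat * Qp j).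
    { intros [|j]; unfold Q, Qp, scr_poly.
      - simpl. rewrite Nat.add_0_r. replace (m + 1)%nat with (S m) by lia.
        fold r1. field. apply bnz.
      - apply (rec3_rec 1 r1 (fun k => a (m + S k)%nat) (fun k => b (m + S k)%nat)). apply bnz. }
    assert (HQp : forall j, Qp (S j) = Q j).
    { intros [|j]; unfold Q, Qp, scr_poly.
      - reflexivity.
      - rewrite rec3_S. reflexivity. }
    specialize (H HQ HQp N).
    assert (Q0 : Q O = 1) by reflexivity.
    assert (Qp0 : Qp O = ((y - a m) - b (S m) * r1) / b m) by reflexivity.
    rewrite Q0, Qp0 in H. unfold Q in H. cbv beta in H.
    apply (Rmult_eq_reg_l (x - y)); [|exact xy].
    rewrite H. unfold r1. field; repeat split; try apply bnz; exact xy.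
Qed.
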